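(* Suppose $L_p,\Psi_p$ satisfy $(A_p-L_pC_p)\Psi_p\oplus\mathbb{W}_p\oplus(-L_p\mathbb{V}_p)\subseteq\Psi_p$ with $0\in\Psi_p$, and suppose $H\in\mathbb{N}$, $K_p$, $\Omega_p\ni0$ and $(\mu,\eta,\Omega)$ are given by one of the following three options: (ZOH) $(A_p^i+B_p^iK_p)\Omega_p\oplus\big(\bigoplus_{j=0}^{i-1}A_p^jL_p(C_p\Psi_p\oplus\mathbb{V}_p)\big)\subseteq\Omega_p$ for all $i\in\{1,\dots,H\}$, $\mu(\bar\nu_c,\hat x_p,\bar x_p)=\bar\nu_c+K_p(\hat x_p-\bar x_p)$, $\eta\equiv0$, $\Omega=\Omega_p\times K_p\Omega_p\times\{0\}$; (prediction-based) $(A_p+B_pK_p)^i\Omega_p\oplus\big(\bigoplus_{j=0}^{i-1}A_p^jL_p(C_p\Psi_p\oplus\mathbb{V}_p)\big)\subseteq\Omega_p$ for all $i\in\{1,\dots,H\}$, $\mu(\bar\nu_c,\hat x_p,\bar x_p)=\bar\nu_c$, $\eta(\hat x_p,\tilde x_p,\bar x_p)=K_p(\tilde x_p-\bar x_p)$, $\Omega=\Omega_p\times\{0\}\times\{0\}$; (local measurement) $(A_p+B_pK_p)\Omega_p\oplus L_p(C_p\Psi_p\oplus\mathbb{V}_p)\subseteq\Omega_p$, $\mu(\bar\nu_c,\hat x_p,\bar x_p)=\bar\nu_c$, $\eta(\hat x_p,\tilde x_p,\bar x_p)=K_p(\hat x_p-\bar x_p)$, $\Omega=\Omega_p\times\{0\}\times\{0\}$.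 Let $t\in\mathbb{N}_0$, $h\in\{1,\dots,H\}$, and let nominal inputs $\bar u(i)=(\bar u_c(i),\bar\gamma(i),0)$, $i=t,\dots,t+h-1$, be given with $\bar\gamma(t)=1$ and $\bar\gamma(i)=0$ for $i\in\{t+1,\dots,t+h-1\}$. Let $x(t),\hat x(t),\bar x(t)$ be given with $\hat x(t)-\bar x(t)\in\Omega$ and $x(t)-\hat x(t)\in\Psi:=\Psi_p\times\{0\}\times\{0\}$, and set $\tilde x(t):=\hat x(t)$. For $i=t,\dots,t+h-1$ apply $u(i):=\phi'(\bar u(i),\hat x(i),\tilde x(i),\bar x(i))$ if $\bar\gamma(i)=1$ and $u(i):=\phi''(\bar u(i),\hat x(i),\tilde x(i),\bar x(i))$ if $\bar\gamma(i)=0$, and let the states evolve by $\bar x(i+1)=f(\bar x(i),\bar u(i))$, $\tilde x(i+1)=f(\tilde x(i),u(i))$, $x(i+1)=f(x(i),u(i))+w(i)$, $\hat x(i+1)=f(\hat x(i),u(i))+B_\epsilon(x(i)-\hat x(i))+B_vv(i)$. Then for all sequences $w(i)\in\mathbb{W}$, $v(i)\in\mathbb{V}$ ($i=t,\dots,t+h-1$) it holds for all $i\in\{t,\dots,t+h\}$ that $\hat x(i)\in\{\bar x(i)\}\oplus\Omega$ and $x(i)\in\{\hat x(i)\}\oplus\Psi\subseteq\{\bar x(i)\}\oplus\Omega\oplus\Psi$.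
   Context: $A_p\in\mathbb{R}^{n_p\times n_p}$, $B_p\in\mathbb{R}^{n_p\times m_p}$, $C_p\in\mathbb{R}^{q_p\times n_p}$; $\mathbb{W}_p\subseteq\mathbb{R}^{n_p}$, $\mathbb{V}_p\subseteq\mathbb{R}^{q_p}$ compact convex sets containing the origin; $L_p\in\mathbb{R}^{n_p\times q_p}$, $K_p\in\mathbb{R}^{m_p\times n_p}$; $B_p^i:=\sum_{j=0}^{i-1}A_p^jB_p$; integers $g\ge1$, $c\ge g$, $b\ge c$. Overall state $x=(x_p,u_s,\beta)\in\mathbb{R}^{n_p}\times\mathbb{R}^{m_p}\times\mathbb{R}$ (similarly $\hat x,\tilde x,\bar x$ with components $\hat x_p$ etc.), input $u=(u_c,\gamma,u_e)\in\mathbb{R}^{m_p}\times\{0,1\}\times\mathbb{R}^{m_p}$, $$f(x,u):=\begin{bmatrix}A_px_p+B_p((1-\gamma)u_s+\gamma u_c+u_e)\\ (1-\gamma)u_s+\gamma u_c\\ \min\{\beta+g-\gamma c,\,b\}\end{bmatrix}.$$ $\mathbb{W}:=\mathbb{W}_p\times\{0\}\times\{0\}$, $\mathbb{V}:=\mathbb{V}_p\times\{0\}\times\{0\}$, $B_\epsilon:=\mathrm{diag}\{L_pC_p,0,0\}$, $B_v:=\mathrm{diag}\{L_p,0,0\}$. For $\bar u=(\bar u_c,\bar\gamma,\cdot)$: $\phi'(\bar u,\hat x,\tilde x,\bar x):=(\mu(\bar u_c,\hat x_p,\bar x_p),1,\eta(\hat x_p,\tilde x_p,\bar x_p))$ and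 $\phi''(\bar u,\hat x,\tilde x,\bar x):=(0,0,\eta(\hat x_p,\tilde x_p,\bar x_p))$. $\oplus$ is Minkowski sum. *)

(* Defs.v *)
From HB Require Import structures.
From mathcomp Require Import all_boot all_order all_algebra.
From mathcomp Require Import all_classical all_reals.
From mathcomp Require Import topology normedtype convex.
Set Implicit Arguments. Unset Strict Implicit. Unset Printing Implicit Defensive.
Import Order.TTheory GRing.Theory Num.Theory.
Local Open Scope classical_set_scope.
Local Open Scope ring_scope.

Definition msum (V : zmodType) (A B : set V) : set V :=
  [set a + b | a in A & b in B].

Fixpoint bigmsum (V : zmodType) (F : nat -> set V) (n : nat) : set V :=
  match n with
  | 0 => [set 0]
  | n'.+1 => msum (bigmsum F n') (F n')
  end.

Definition mximg (R : ringType) (m n : nat) (M : 'M[R]_(m, n)) (A : set 'cV[R]_n)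
  : set 'cV[R]_m := [set M *m a | a in A].

Fixpoint mxpow (R : ringType) (n : nat) (A : 'M[R]_n) (i : nat) : 'M[R]_n :=
  match i with 0 => 1%:M | i'.+1 => A *m mxpow A i' end.

Definition Bpi (R : ringType) (n m : nat) (A : 'M[R]_n) (B : 'M[R]_(n, m)) (i : nat)
  : 'M[R]_(n, m) := \sum_(j < i) mxpow A j *m B.

(* Overall state x = (x_p, u_s, beta) (first component of dimension d;
   d = n_p for states, d = q_p for measurement noises v), and
   input u = (u_c, gamma, u_e) with gamma in {0,1} encoded as a bool. *)
Definition state (R : ringType) (d mp : nat) : Type :=
  ('cV[R]_d * 'cV[R]_mp * R)%type.
Definition input (R : ringType) (mp : nat) : Type :=
  ('cV[R]_mp * bool * 'cV[R]_mp)%type.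

Definition b2R (R : ringType) (b : bool) : R := if b then 1 else 0.

Definition fdyn (R : realDomainType) (np mp : nat) (Ap : 'M[R]_np) (Bp : 'M[R]_(np, mp))
  (g c b : nat) (x : state R np mp) (u : input R mp) : state R np mp :=
  let: (xp, us, beta) := x in
  let: (uc, gam, ue) := u in
  let s := (1 - b2R R gam) *: us + b2R R gam *: uc in
  (Ap *m xp + Bp *m (s + ue), s, Num.min (beta + g%:R - b2R R gam * c%:R) b%:R).

Definition prod3 (R : ringType) (d mp : nat) (S1 : set 'cV[R]_d) (S2 : set 'cV[R]_mp)
  (S3 : set R) : set (state R d mp) := [set x | S1 x.1.1 /\ S2 x.1.2 /\ S3 x.2].

Definition lift_set (R : ringType) (d mp : nat) (S : set 'cV[R]_d) : set (state R d mp) :=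
  prod3 S [set 0] [set 0].

(* B_eps = diag{L_p C_p, 0, 0} and B_v = diag{L_p, 0, 0} *)
Definition Beps (R : ringType) (np mp qp : nat) (Lp : 'M[R]_(np, qp)) (Cp : 'M[R]_(qp, np))
  (e : state R np mp) : state R np mp := (Lp *m Cp *m e.1.1, 0, 0).
Definition Bv (R : ringType) (np mp qp : nat) (Lp : 'M[R]_(np, qp))
  (v : state R qp mp) : state R np mp := (Lp *m v.1.1, 0, 0).

Definition phi1 (R : ringType) (np mp : nat)
  (mu : 'cV[R]_mp -> 'cV[R]_np -> 'cV[R]_np -> 'cV[R]_mp)
  (eta : 'cV[R]_np -> 'cV[R]_np -> 'cV[R]_np -> 'cV[R]_mp)
  (ub : input R mp) (xh xt xb : state R np mp) : input R mp :=
  (mu ub.1.1 xh.1.1 xb.1.1, true, eta xh.1.1 xt.1.1 xb.1.1).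
Definition phi2 (R : ringType) (np mp : nat)
  (eta : 'cV[R]_np -> 'cV[R]_np -> 'cV[R]_np -> 'cV[R]_mp)
  (ub : input R mp) (xh xt xb : state R np mp) : input R mp :=
  (0, false, eta xh.1.1 xt.1.1 xb.1.1).

(* Main.v *)
Require Import Defs.
From HB Require Import structures.
From mathcomp Require Import all_boot all_order all_algebra.
From mathcomp Require Import all_classical all_reals topology normedtype convex.
From mathcomp Require Import zify.
Import Order.TTheory GRing.Theory Num.Theory numFieldNormedType.Exports.
Local Open Scope classical_set_scope.
Local Open Scope ring_scope.

Lemma zA (V : zmodType) (X Y S w E v : V) : X + S + w - (Y + S + E + v) = X - Y - E + w - v.
Proof. rewrite !opprD !addrA [X + S + w]addrAC [X + w + S - Y]addrAC addrK.
by rewrite [X + w - Y]addrAC [X - Y + w - E]addrAC. Qed.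

Lemma msumI (V : zmodType) (A B : set V) a b : A a -> B b -> msum A B (a + b).
Proof. by move=> Aa Bb; exists a => //; exists b. Qed.

Lemma mximgI (R : ringType) m n (M : 'M[R]_(m,n)) A a : A a -> mximg M A (M *m a).
Proof. by move=> Aa; exists a. Qed.

Lemma bigmsum_sum (V : zmodType) (F : nat -> set V) k (y : nat -> V) :
  (forall j, (j < k)%N -> F j (y j)) -> bigmsum F k (\sum_(j < k) y j).
Proof.
elim: k => [|k IH] Hy /=; first by rewrite big_ord0.
rewrite big_ord_recr /=; apply: msumI; last exact: Hy.
by apply: IH => j Hj; apply: Hy; rewrite ltnS ltnW.
Qed.

Section S.
Variables (R : realDomainType) (np mp : nat).
Implicit Types (s : state R np mp) (u : input R mp).

Lemma fdyn_p (A : 'M[R]_np) B g c b s u :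
  (fdyn A B g c b s u).1.1 = A *m s.1.1 + B *m ((1 - b2R R u.1.2) *: s.1.2 + b2R R u.1.2 *: u.1.1 + u.2).
Proof. by case: s => [[? ?] ?]; case: u => [[? ?] ?]. Qed.
Lemma fdyn_s (A : 'M[R]_np) B g c b s u :
  (fdyn A B g c b s u).1.2 = (1 - b2R R u.1.2) *: s.1.2 + b2R R u.1.2 *: u.1.1.
Proof. by case: s => [[? ?] ?]; case: u => [[? ?] ?]. Qed.
Lemma fdyn_b (A : 'M[R]_np) B g c b s u :
  (fdyn A B g c b s u).2 = Num.min (s.2 + g%:R - b2R R u.1.2 * c%:R) b%:R.
Proof. by case: s => [[? ?] ?]; case: u => [[? ?] ?]. Qed.
Lemma add11 s1 s2 : (s1 + s2).1.1 = s1.1.1 + s2.1.1. Proof. by []. Qed.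
Lemma add12 s1 s2 : (s1 + s2).1.2 = s1.1.2 + s2.1.2. Proof. by []. Qed.
Lemma add2 s1 s2 : (s1 + s2).2 = s1.2 + s2.2. Proof. by []. Qed.
Lemma sub11 s1 s2 : (s1 - s2).1.1 = s1.1.1 - s2.1.1. Proof. by []. Qed.
Lemma sub12 s1 s2 : (s1 - s2).1.2 = s1.1.2 - s2.1.2. Proof. by []. Qed.
Lemma sub2 s1 s2 : (s1 - s2).2 = s1.2 - s2.2. Proof. by []. Qed.
End S.

Lemma sT (R : ringType) m (a b : 'cV[R]_m) : (1 - b2R R true) *: a + b2R R true *: b = b.
Proof. by rewrite /= subrr scale0r add0r scale1r. Qed.
Lemma sF (R : ringType) m (a b : 'cV[R]_m) : (1 - b2R R false) *: a + b2R R false *: b = a.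
Proof. by rewrite /= subr0 scale1r scale0r addr0. Qed.

Lemma lift_setP (R : ringType) d mp (S : set 'cV[R]_d) (e : state R d mp) :
  lift_set S e <-> [/\ S e.1.1, e.1.2 = 0 & e.2 = 0].
Proof. by rewrite /lift_set /prod3 /=; split => [[? [? ?]]|[? ? ?]]. Qed.
Lemma prod3P (R : ringType) d mp S1 S2 S3 (e : state R d mp) :
  prod3 S1 S2 S3 e <-> [/\ S1 e.1.1, S2 e.1.2 & S3 e.2].
Proof. by rewrite /prod3 /=; split => [[? [? ?]]|[? ? ?]]. Qed.

Lemma zB (V : zmodType) (a b p q e f : V) : (a + p + e + f) - (b + q) = (a - b) + (p - q) + (e + f).
Proof. rewrite opprD !addrA [a + p + e + f - b]addrAC [a + p + e - b]addrAC [a + p - b]addrAC [a - b + p + e + f - q]addrAC [a - b + p + e - q]addrAC. by []. Qed.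

Definition shz {T : Type} (z : nat -> T) (y : T) (j : nat) : T :=
  if j is j'.+1 then z j' else y.

Lemma shift_alg (R : ringType) n q (A : 'M[R]_n) (L : 'M[R]_(n,q)) k (z : nat -> 'cV[R]_q) y :
  A *m (\sum_(j<k) (mxpow A j *m L) *m z j) + L *m y
  = \sum_(j<k.+1) (mxpow A j *m L) *m shz z y (nat_of_ord j).
Proof.
rewrite big_ord_recl /= mul1mx addrC; congr (_ + _).
rewrite mulmx_sumr; apply: eq_bigr => j _ /=.
by rewrite !mulmxA.
Qed.

Lemma Bpi_S (R : ringType) n m (A : 'M[R]_n) (B : 'M[R]_(n,m)) k :
  Bpi A B k.+1 = B + A *m Bpi A B k.
Proof.
rewrite /Bpi big_ord_recl /= mul1mx; congr (_ + _).
rewrite mulmx_sumr; apply: eq_bigr => j _ /=.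
by rewrite !mulmxA.
Qed.

Lemma zoh_alg (R : ringType) n m q (A : 'M[R]_n) (B : 'M[R]_(n,m)) (K : 'M[R]_(m,n))
  (L : 'M[R]_(n,q)) k (d0 : 'cV[R]_n) (z : nat -> 'cV[R]_q) y :
  A *m ((mxpow A k + Bpi A B k *m K) *m d0 + \sum_(j<k) (mxpow A j *m L) *m z j)
    + B *m (K *m d0) + L *m y
  = (mxpow A k.+1 + Bpi A B k.+1 *m K) *m d0
    + \sum_(j<k.+1) (mxpow A j *m L) *m shz z y (nat_of_ord j).
Proof.
rewrite -shift_alg mulmxDr [RHS]addrA; congr (_ + _).
rewrite addrAC; congr (_ + _).
rewrite Bpi_S /= !mulmxDl mulmxDr !mulmxA -!addrA; congr (_ + _).
exact: addrC.
Qed.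

Lemma sT' (R : ringType) m (a b : 'cV[R]_m) : (1 - 1) *: a + 1 *: b = b.
Proof. by rewrite subrr scale0r add0r scale1r. Qed.
Lemma sF' (R : ringType) m (a b : 'cV[R]_m) : (1 - 0) *: a + 0 *: b = a.
Proof. by rewrite subr0 scale1r scale0r addr0. Qed.
Lemma zC (V : zmodType) (a b : V) : a + b + 0 - (a + 0) = b.
Proof. by rewrite !addr0 addrAC subrr add0r. Qed.
Lemma zD (V : zmodType) (a b : V) : a + b - a = b.
Proof. by rewrite addrAC subrr add0r. Qed.
Lemma zF (V : zmodType) (X S T Y : V) : X + (S + T) - (Y + S) = X - Y + T.
Proof.
rewrite addrA opprD addrA [X + S + T - Y]addrAC [X + S - Y + T - S]addrAC [X + S - Y]addrAC.
by rewrite addrK.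
Qed.
Lemma pred_alg (R : ringType) n m (A : 'M[R]_n) (B : 'M[R]_(n,m)) (K : 'M[R]_(m,n)) (a b : 'cV[R]_n) s :
  A *m a + B *m (s + K *m (a - b)) - (A *m b + B *m s) = (A + B *m K) *m (a - b).
Proof. by rewrite mulmxDr zF -mulmxBr mulmxDl mulmxA. Qed.
Lemma loc_alg (R : ringType) n m q (A : 'M[R]_n) (B : 'M[R]_(n,m)) (K : 'M[R]_(m,n))
  (L : 'M[R]_(n,q)) (d : 'cV[R]_n) y :
  A *m d + B *m (K *m d) + L *m y = (A + B *m K) *m d + L *m y.
Proof. by rewrite mulmxDl mulmxA. Qed.
Theorem proposition1 (R : realType) (np mp qp : nat)
  (Ap : 'M[R]_np) (Bp : 'M[R]_(np, mp)) (Cp : 'M[R]_(qp, np))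
  (Wp : set 'cV[R]_np) (Vp : set 'cV[R]_qp)
  (Lp : 'M[R]_(np, qp)) (Kp : 'M[R]_(mp, np)) (g c b : nat)
  (Psip Omegap : set 'cV[R]_np) (H : nat)
  (mu : 'cV[R]_mp -> 'cV[R]_np -> 'cV[R]_np -> 'cV[R]_mp)
  (eta : 'cV[R]_np -> 'cV[R]_np -> 'cV[R]_np -> 'cV[R]_mp)
  (Omega : set (state R np mp))
  (t h : nat) (ubc : nat -> 'cV[R]_mp) (gbar : nat -> bool)
  (w : nat -> state R np mp) (v : nat -> state R qp mp)
  (x xh xt xb : nat -> state R np mp) :
  (* standing assumptions *)
  compact Wp -> convex_set Wp -> Wp 0 ->
  compact Vp -> convex_set Vp -> Vp 0 ->
  (1 <= g)%N -> (g <= c)%N -> (c <= b)%N ->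
  (* observer error invariance *)
  msum (msum (mximg (Ap - Lp *m Cp) Psip) Wp) (mximg (- Lp) Vp) `<=` Psip ->
  Psip 0 ->
  Omegap 0 ->
  (* one of the three options *)
  [\/ (* ZOH *)
      [/\ (forall i, (1 <= i <= H)%N ->
             msum (mximg (mxpow Ap i + Bpi Ap Bp i *m Kp) Omegap)
                  (bigmsum (fun j => mximg (mxpow Ap j *m Lp) (msum (mximg Cp Psip) Vp)) i)
             `<=` Omegap),
          mu = (fun nuc xhp xbp => nuc + Kp *m (xhp - xbp)),
          eta = (fun _ _ _ => 0) &
          Omega = prod3 Omegap (mximg Kp Omegap) [set 0]],
      (* prediction-based *)
      [/\ (forall i, (1 <= i <= H)%N ->
             msum (mximg (mxpow (Ap + Bp *m Kp) i) Omegap)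
                  (bigmsum (fun j => mximg (mxpow Ap j *m Lp) (msum (mximg Cp Psip) Vp)) i)
             `<=` Omegap),
          mu = (fun nuc _ _ => nuc),
          eta = (fun _ xtp xbp => Kp *m (xtp - xbp)) &
          Omega = prod3 Omegap [set 0] [set 0]] |
      (* local measurement *)
      [/\ msum (mximg (Ap + Bp *m Kp) Omegap) (mximg Lp (msum (mximg Cp Psip) Vp))
             `<=` Omegap,
          mu = (fun nuc _ _ => nuc),
          eta = (fun xhp _ xbp => Kp *m (xhp - xbp)) &
          Omega = prod3 Omegap [set 0] [set 0]]] ->
  (1 <= h <= H)%N ->
  gbar t = true ->
  (forall i, (t < i < t + h)%N -> gbar i = false) ->
  (* initial conditions *)
  Omega (xh t - xb t) ->
  lift_set Psip (x t - xh t) ->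
  xt t = xh t ->
  (* disturbances and measurement noises *)
  (forall i, (t <= i < t + h)%N -> lift_set Wp (w i)) ->
  (forall i, (t <= i < t + h)%N -> lift_set Vp (v i)) ->
  (* closed-loop evolution *)
  (forall i, (t <= i < t + h)%N ->
     let ub : input R mp := (ubc i, gbar i, 0) in
     let u : input R mp :=
       if gbar i then phi1 mu eta ub (xh i) (xt i) (xb i)
       else phi2 eta ub (xh i) (xt i) (xb i) in
     [/\ xb i.+1 = fdyn Ap Bp g c b (xb i) ub,
         xt i.+1 = fdyn Ap Bp g c b (xt i) u,
         x i.+1 = fdyn Ap Bp g c b (x i) u + w i &
         xh i.+1 = fdyn Ap Bp g c b (xh i) u + Beps Lp Cp (x i - xh i) + Bv Lp (v i)]) ->
  forall i, (t <= i <= t + h)%N ->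
    [/\ msum [set xb i] Omega (xh i),
        msum [set xh i] (lift_set Psip) (x i) &
        msum [set xh i] (lift_set Psip)
          `<=` msum (msum [set xb i] Omega) (lift_set Psip)].
Proof.
move=> cW cvW W0 cV cvV V0 g1 gc cb Hinv Psi0 Om0 Hopt /andP[h1 hH] gt gf Hd0 He0 xt0 Hw Hv Hstep.
have Hrng : forall k, (k < h)%N -> (t <= t + k < t + h)%N.
  by move=> k Hk; rewrite leq_addr ltn_add2l.
have HE : forall k, (k <= h)%N -> [/\ Psip ((x (t+k)%N).1.1 - (xh (t+k)%N).1.1),
   (x (t+k)%N).1.2 = (xh (t+k)%N).1.2 & (x (t+k)%N).2 = (xh (t+k)%N).2].
  elim=> [|k IH] Hk.
    rewrite addn0; case/lift_setP: He0; rewrite sub11 sub12 sub2 => Hp /subr0_eq Hs /subr0_eq Hb.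
    by split.
  have [Hp Hs Hb] := IH (ltnW Hk).
  have := Hstep _ (Hrng _ Hk); cbv zeta; case=> _ _ Hx Hxh.
  set u := (if gbar _ then _ else _) in Hx Hxh.
  case/lift_setP: (Hw _ (Hrng _ Hk)) => Hwp Hws Hwb.
  case/lift_setP: (Hv _ (Hrng _ Hk)) => Hvp Hvs Hvb.
  rewrite addnS Hx Hxh !add11 !add12 !add2 !fdyn_p !fdyn_s !fdyn_b Hs Hb Hws Hwb /=.
  split; [|by rewrite !addr0|by rewrite !addr0].
  rewrite /Beps /Bv /= zA -mulmxBr -mulmxBl.
  apply: Hinv; apply: msumI; [apply: msumI|] => //; first exact: mximgI.
  by rewrite -mulNmx; apply: mximgI.
have Hg : forall k, (k < h)%N -> gbar (t+k)%N = (k == 0%N).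
  move=> [|j] Hj; first by rewrite addn0 gt.
  by rewrite gf //; lia.
have HD : forall k, (k <= h)%N -> Omega (xh (t+k)%N - xb (t+k)%N).
  move=> k0 Hk0.
  case: Hopt => [[HZ Emu Eeta HOm]|[HP Emu Eeta HOm]|[HL Emu Eeta HOm]]; subst mu eta Omega.
  - case/prod3P: Hd0; rewrite sub11 sub12 sub2 => Hd0p [a Ha Hd0s] /subr0_eq Hd0b.
    set d0 := (xh t).1.1 - (xb t).1.1 in Hd0p *.
    have Inv : forall k, (k <= h)%N -> [/\ (xh (t+k)%N).2 = (xb (t+k)%N).2,
       (0 < k)%N -> (xh (t+k)%N).1.2 - (xb (t+k)%N).1.2 = Kp *m d0 &
       exists2 z : nat -> 'cV[R]_qp, (forall j, (j < k)%N -> msum (mximg Cp Psip) Vp (z j)) &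
       (xh (t+k)%N).1.1 - (xb (t+k)%N).1.1 = (mxpow Ap k + Bpi Ap Bp k *m Kp) *m d0
          + \sum_(j<k) (mxpow Ap j *m Lp) *m z j].
      elim=> [|k IH] Hk.
        rewrite addn0; split => //; exists (fun _ => 0) => //.
        by rewrite /Bpi /= !big_ord0 mul0mx !addr0 mul1mx.
      have [Ib Is [z Hz Ip]] := IH (ltnW Hk).
      have := Hstep _ (Hrng _ Hk); cbv zeta; case=> Hxb _ _ Hxh.
      have [Ep _ _] := HE k (ltnW Hk).
      case/lift_setP: (Hv _ (Hrng _ Hk)) => Hvp _ _.
      have Hy : msum (mximg Cp Psip) Vp (Cp *m ((x (t+k)%N).1.1 - (xh (t+k)%N).1.1) + (v (t+k)%N).1.1).
        by apply: msumI => //; apply: mximgI.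
      rewrite addnS Hxb Hxh !add11 !add12 !add2 !fdyn_p !fdyn_s !fdyn_b /Beps /Bv /phi1 /phi2 (Hg _ Hk) /=.
      set y := Cp *m _ + _ in Hy.
      case: eqP => [ek|kn0].
        subst k; rewrite !addn0 in Ip *; rewrite /= !sT' !addr0.
        split.
        - by rewrite Hd0b.
        - by move=> _; rewrite addrAC subrr add0r.
        - exists (shz z y); first by move=> [|j] //.
          rewrite zB -mulmxBr -[Bp *m _ - _]mulmxBr zD -mulmxA -mulmxDr.
          etransitivity; last exact: (zoh_alg _ _ _ _ Ap Bp Kp Lp 0 d0 z y).
          by rewrite -Ip /y addn0.
      have k0p : (0 < k)%N by rewrite lt0n; apply/eqP.
      rewrite /= !sF' !addr0.
      split.
      - by rewrite Ib.
      - by move=> _; apply: Is.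
      - exists (shz z y).
          by move=> [|j] /= Hj; [exact: Hy | exact: Hz].
        rewrite zB -!mulmxBr (Is k0p) -mulmxA -mulmxDr.
        etransitivity; last exact: (zoh_alg _ _ _ _ Ap Bp Kp Lp k d0 z y).
        by rewrite -Ip.
    have [Ib Is [z Hz Ip]] := Inv k0 Hk0.
    apply/prod3P; rewrite sub11 sub12 sub2 Ib subrr.
    have [Ek|k0p] := posnP k0.
      by subst k0; rewrite addn0; split => //; exists a.
    split; last by [].
    + rewrite Ip; apply: (HZ k0); first by rewrite k0p (leq_trans Hk0 hH).
      apply: msumI; first by apply: mximgI.
      apply: (bigmsum_sum _ _ k0 (fun j => mxpow Ap j *m Lp *m z j)) => j Hj.
      by apply: mximgI; exact: Hz.
    + by rewrite (Is k0p); apply: mximgI.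
  - case/prod3P: Hd0; rewrite sub11 sub12 sub2 => Hd0p /subr0_eq Hd0s /subr0_eq Hd0b.
    set d0 := (xh t).1.1 - (xb t).1.1 in Hd0p *.
    have Inv : forall k, (k <= h)%N -> [/\ (xh (t+k)%N).2 = (xb (t+k)%N).2,
       (0 < k)%N -> (xh (t+k)%N).1.2 = (xb (t+k)%N).1.2,
       (0 < k)%N -> (xt (t+k)%N).1.2 = (xb (t+k)%N).1.2,
       (xt (t+k)%N).1.1 - (xb (t+k)%N).1.1 = mxpow (Ap + Bp *m Kp) k *m d0 &
       exists2 z : nat -> 'cV[R]_qp, (forall j, (j < k)%N -> msum (mximg Cp Psip) Vp (z j)) &
       (xh (t+k)%N).1.1 - (xt (t+k)%N).1.1 = \sum_(j<k) (mxpow Ap j *m Lp) *m z j].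
      elim=> [|k IH] Hk.
        rewrite addn0 xt0; split => //; first by rewrite /= mul1mx.
        by exists (fun _ => 0) => //; rewrite subrr big_ord0.
      have [Ib Ish Ist It [z Hz Ir]] := IH (ltnW Hk).
      have := Hstep _ (Hrng _ Hk); cbv zeta; case=> Hxb Hxt _ Hxh.
      have [Ep _ _] := HE k (ltnW Hk).
      case/lift_setP: (Hv _ (Hrng _ Hk)) => Hvp _ _.
      have Hy : msum (mximg Cp Psip) Vp (Cp *m ((x (t+k)%N).1.1 - (xh (t+k)%N).1.1) + (v (t+k)%N).1.1).
        by apply: msumI => //; apply: mximgI.
      rewrite addnS Hxb Hxt Hxh !add11 !add12 !add2 !fdyn_p !fdyn_s !fdyn_b /Beps /Bv /phi1 /phi2 (Hg _ Hk) /=.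
      set y := Cp *m _ + _ in Hy.
      case: eqP => [ek|kn0].
        subst k; rewrite /= !sT' !addr0.
        split => //.
        - by rewrite Ib.
        - by rewrite pred_alg It mulmxA.
        - exists (shz z y); first by move=> [|j].
          rewrite zB subrr addr0 -mulmxBr -mulmxA -mulmxDr Ir.
          exact: shift_alg.
      have k0p : (0 < k)%N by rewrite lt0n; apply/eqP.
      rewrite /= !sF' !addr0.
      split.
      - by rewrite Ib.
      - by move=> _; rewrite (Ish k0p).
      - by move=> _; rewrite (Ist k0p).
      - by rewrite (Ist k0p) pred_alg It mulmxA.
      - exists (shz z y); first by move=> [|j] /= Hj; [exact: Hy | exact: Hz].
        rewrite (Ish k0p) (Ist k0p) zB subrr addr0 -mulmxBr -mulmxA -mulmxDr Ir.
        exact: shift_alg.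
    have [Ib Ish Ist It [z Hz Ir]] := Inv k0 Hk0.
    apply/prod3P; rewrite sub11 sub12 sub2 Ib subrr.
    have [Ek|k0p] := posnP k0.
      by subst k0; rewrite addn0 Hd0s subrr; split.
    rewrite (Ish k0p) subrr; split => //.
    have -> : (xh (t+k0)%N).1.1 - (xb (t+k0)%N).1.1 =
      ((xt (t+k0)%N).1.1 - (xb (t+k0)%N).1.1) + ((xh (t+k0)%N).1.1 - (xt (t+k0)%N).1.1).
      by rewrite [RHS]addrC [RHS]addrA subrK.
    rewrite It Ir; apply: (HP k0); first by rewrite k0p (leq_trans Hk0 hH).
    apply: msumI; first by apply: mximgI.
    apply: (bigmsum_sum _ _ k0 (fun j => mxpow Ap j *m Lp *m z j)) => j Hj.
    by apply: mximgI; exact: Hz.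
  - case/prod3P: Hd0; rewrite sub11 sub12 sub2 => Hd0p /subr0_eq Hd0s /subr0_eq Hd0b.
    have Inv : forall k, (k <= h)%N -> [/\ (xh (t+k)%N).2 = (xb (t+k)%N).2,
       (0 < k)%N -> (xh (t+k)%N).1.2 = (xb (t+k)%N).1.2 &
       Omegap ((xh (t+k)%N).1.1 - (xb (t+k)%N).1.1)].
      elim=> [|k IH] Hk; first by rewrite addn0.
      have [Ib Ish Id] := IH (ltnW Hk).
      have := Hstep _ (Hrng _ Hk); cbv zeta; case=> Hxb _ _ Hxh.
      have [Ep _ _] := HE k (ltnW Hk).
      case/lift_setP: (Hv _ (Hrng _ Hk)) => Hvp _ _.
      have Hy : msum (mximg Cp Psip) Vp (Cp *m ((x (t+k)%N).1.1 - (xh (t+k)%N).1.1) + (v (t+k)%N).1.1).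
        by apply: msumI => //; apply: mximgI.
      rewrite addnS Hxb Hxh !add11 !add12 !add2 !fdyn_p !fdyn_s !fdyn_b /Beps /Bv /phi1 /phi2 (Hg _ Hk) /=.
      set y := Cp *m _ + _ in Hy.
      case: eqP => [ek|kn0].
        subst k; rewrite /= !sT' !addr0.
        split => //; first by rewrite Ib.
        rewrite zB -!mulmxBr zD -mulmxA -mulmxDr loc_alg; apply: HL.
        by apply: msumI; apply: mximgI.
      have k0p : (0 < k)%N by rewrite lt0n; apply/eqP.
      rewrite /= !sF' !addr0.
      split; [by rewrite Ib | by move=> _; rewrite (Ish k0p) |].
      rewrite (Ish k0p) zB -!mulmxBr zD -mulmxA -mulmxDr loc_alg; apply: HL.
      by apply: msumI; apply: mximgI.
    have [Ib Ish Id] := Inv k0 Hk0.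
    apply/prod3P; rewrite sub11 sub12 sub2 Ib subrr.
    have [Ek|k0p] := posnP k0.
      by subst k0; rewrite addn0 Hd0s subrr; split => //; rewrite addn0 in Id.
    by rewrite (Ish k0p) subrr.
move=> i /andP[ti tih].
have [k -> Hk] : exists2 k, i = (t + k)%N & (k <= h)%N.
  by exists (i - t)%N; [rewrite subnKC | rewrite leq_subLR].
have [Hp Hs Hb] := HE _ Hk.
have Hd := HD _ Hk.
split.
- exists (xb (t+k)%N) => //; exists (xh (t+k)%N - xb (t+k)%N) => //; exact: subrKC.
- exists (xh (t+k)%N) => //; exists (x (t+k)%N - xh (t+k)%N); last exact: subrKC.
  by apply/lift_setP; rewrite sub11 sub12 sub2 Hs Hb !subrr; split.
- move=> z [a0 -> [p Hp' <-]]; exists (xh (t+k)%N); last by exists p.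
  exists (xb (t+k)%N) => //; exists (xh (t+k)%N - xb (t+k)%N) => //; exact: subrKC.
Qed.
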